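(* Let $A\in\mathscr{C}^-$, $B\in\mathscr{C}$ and $f\in\mathscr{C}(A,B)$. Choose a distinguished triangle $S_A[-1]\overset{s_A}{\to}A\overset{w_A}{\to}W_A\to S_A$ with $S_A\in\mathcal{S}$, $W_A\in\mathcal{W}$, and then a distinguished triangle $S_A[-1]\overset{f\circ s_A}{\to}B\overset{m_f}{\to}M_f\to S_A$. Then: (1) $\underline{m}_f\circ\underline{f}=0$ in $\underline{\mathscr{C}}$; (2) for every $Y\in\mathscr{C}^+$, composition with $\underline{m}_f$ gives a bijection \[ -\circ\underline{m}_f\colon\underline{\mathscr{C}}(M_f,Y)\to\{\beta\in\underline{\mathscr{C}}(B,Y)\mid\beta\circ\underline{f}=0\}; \] (3) if $B\in\mathscr{C}^-$, then $M_f\in\mathscr{C}^-$.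
   Context: $\mathscr{C}$ is a triangulated category with shift $[1]$; subcategories are full, additive, closed under isomorphisms and direct summands. $\mathrm{Ext}^1(X,Y)=\mathscr{C}(X,Y[1])$. $\mathcal{M}\ast\mathcal{N}$ is the full subcategory of objects $C$ admitting a distinguished triangle $M\to C\to N\to M[1]$ with $M\in\mathcal{M}$, $N\in\mathcal{N}$. A cotorsion pair $(\mathcal{U},\mathcal{V})$: $\mathrm{Ext}^1(\mathcal{U},\mathcal{V})=0$ and $\mathscr{C}=\mathcal{U}\ast\mathcal{V}[1]$. Fix a twin cotorsion pair, i.e. cotorsion pairs $(\mathcal{S},\mathcal{T}),(\mathcal{U},\mathcal{V})$ with $\mathrm{Ext}^1(\mathcal{S},\mathcal{V})=0$. Put $\mathcal{W}=\mathcal{T}\cap\mathcal{U}$, $\mathscr{C}^-=\mathcal{S}[-1]\ast\mathcal{W}$, $\mathscr{C}^+=\mathcal{W}\ast\mathcal{V}[1]$. $\underline{\mathscr{C}}$ is the ideal quotient of $\mathscr{C}$ by morphisms factoring through objects of $\mathcal{W}$, and $\underline{f}$ denotes the image of $f$. *)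

(* Defs.v *)
From mathcomp Require Import all_boot all_algebra.
Set Implicit Arguments. Unset Strict Implicit. Unset Printing Implicit Defensive.
Import GRing.Theory.
Local Open Scope ring_scope.

Record TriData := {
  Obj :> Type;
  Mor : Obj -> Obj -> zmodType;
  cmp : forall X Y Z : Obj, Mor Y Z -> Mor X Y -> Mor X Z;
  idm : forall X : Obj, Mor X X;
  sh : Obj -> Obj;
  shm : forall X Y : Obj, Mor X Y -> Mor (sh X) (sh Y);
  dist : forall X Y Z : Obj, Mor X Y -> Mor Y Z -> Mor Z (sh X) -> Prop }.

Arguments Mor {_}.
Arguments cmp {_ _ _ _}.
Arguments idm {_}.
Arguments sh {_}.
Arguments shm {_ _ _}.
Arguments dist {_ _ _ _}.

Section Tri.
Context {C : TriData}.

Definition is_iso (X Y : C) (f : Mor X Y) : Prop :=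
  exists g : Mor Y X, cmp g f = idm X /\ cmp f g = idm Y.

Definition iso (X Y : C) : Prop := exists f : Mor X Y, is_iso f.

Definition is_zero (Z : C) : Prop :=
  (forall X (f g : Mor Z X), f = g) /\ (forall X (f g : Mor X Z), f = g).

Definition biprod (Y Z P : C) (i1 : Mor Y P) (i2 : Mor Z P)
    (p1 : Mor P Y) (p2 : Mor P Z) : Prop :=
  [/\ cmp p1 i1 = idm Y, cmp p2 i2 = idm Z, cmp p2 i1 = 0, cmp p1 i2 = 0
    & cmp i1 p1 + cmp i2 p2 = idm P].

Definition tri_iso (X Y Z X' Y' Z' : C)
    (f : Mor X Y) (g : Mor Y Z) (h : Mor Z (sh X))
    (f' : Mor X' Y') (g' : Mor Y' Z') (h' : Mor Z' (sh X')) : Prop :=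
  exists (a : Mor X X') (b : Mor Y Y') (c : Mor Z Z'),
    [/\ is_iso a, is_iso b & is_iso c] /\
    [/\ cmp b f = cmp f' a, cmp c g = cmp g' b
      & cmp (shm a) h = cmp h' c].

Record IsTriangulated : Prop := {
  cmp_assoc : forall (W X Y Z : C) (f : Mor W X) (g : Mor X Y) (h : Mor Y Z),
      cmp h (cmp g f) = cmp (cmp h g) f;
  cmp_idl : forall (X Y : C) (f : Mor X Y), cmp (idm Y) f = f;
  cmp_idr : forall (X Y : C) (f : Mor X Y), cmp f (idm X) = f;
  cmp_addl : forall (X Y Z : C) (g1 g2 : Mor Y Z) (f : Mor X Y),
      cmp (g1 + g2) f = cmp g1 f + cmp g2 f;
  cmp_addr : forall (X Y Z : C) (g : Mor Y Z) (f1 f2 : Mor X Y),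
      cmp g (f1 + f2) = cmp g f1 + cmp g f2;
  zero_exists : exists Z : C, is_zero Z;
  biprod_exists : forall Y Z : C, exists (P : C) (i1 : Mor Y P) (i2 : Mor Z P)
      (p1 : Mor P Y) (p2 : Mor P Z), biprod i1 i2 p1 p2;
  shm_comp : forall (X Y Z : C) (g : Mor Y Z) (f : Mor X Y),
      shm (cmp g f) = cmp (shm g) (shm f);
  shm_id : forall X : C, shm (idm X) = idm (sh X);
  shm_add : forall (X Y : C) (f g : Mor X Y), shm (f + g) = shm f + shm g;
  shm_inj : forall (X Y : C) (f g : Mor X Y), shm f = shm g -> f = g;
  shm_surj : forall (X Y : C) (g : Mor (sh X) (sh Y)), exists f, shm f = g;
  sh_esurj : forall Y : C, exists X : C, iso (sh X) Y;
  dist_iso : forall (X Y Z X' Y' Z' : C)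
      (f : Mor X Y) (g : Mor Y Z) (h : Mor Z (sh X))
      (f' : Mor X' Y') (g' : Mor Y' Z') (h' : Mor Z' (sh X')),
      dist f g h -> tri_iso f g h f' g' h' -> dist f' g' h';
  dist_id : forall X Z : C, is_zero Z ->
      dist (idm X) (0 : Mor X Z) (0 : Mor Z (sh X));
  dist_ext : forall (X Y : C) (f : Mor X Y),
      exists (Z : C) (g : Mor Y Z) (h : Mor Z (sh X)), dist f g h;
  dist_rot : forall (X Y Z : C) (f : Mor X Y) (g : Mor Y Z) (h : Mor Z (sh X)),
      dist f g h <-> dist g h (- shm f);
  dist_mor : forall (X Y Z X' Y' Z' : C)
      (f : Mor X Y) (g : Mor Y Z) (h : Mor Z (sh X))
      (f' : Mor X' Y') (g' : Mor Y' Z') (h' : Mor Z' (sh X'))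
      (a : Mor X X') (b : Mor Y Y'),
      dist f g h -> dist f' g' h' -> cmp b f = cmp f' a ->
      exists c : Mor Z Z', cmp c g = cmp g' b /\ cmp h' c = cmp (shm a) h;
  dist_oct : forall (X Y Z Z' X' Y' : C) (f : Mor X Y) (g : Mor Y Z)
      (f1 : Mor Y Z') (f2 : Mor Z' (sh X))
      (g1 : Mor Z X') (g2 : Mor X' (sh Y))
      (h1 : Mor Z Y') (h2 : Mor Y' (sh X)),
      dist f f1 f2 -> dist g g1 g2 -> dist (cmp g f) h1 h2 ->
      exists (u : Mor Z' Y') (v : Mor Y' X'),
        [/\ dist u v (cmp (shm f1) g2),
            cmp u f1 = cmp h1 g, cmp h2 u = f2,
            cmp v h1 = g1 & cmp g2 v = cmp (shm f) h2] }.

(* Subcategories (identified with predicates on objects): full, additive,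
   closed under isomorphisms and direct summands. *)
Definition subcat (P : C -> Prop) : Prop :=
  [/\ forall X Y : C, iso X Y -> P X -> P Y,
      exists Z : C, is_zero Z /\ P Z,
      (forall (Y Z B : C) i1 i2 p1 p2, @biprod Y Z B i1 i2 p1 p2 ->
          P Y -> P Z -> P B)
    & (forall (Y Z B : C) i1 i2 p1 p2, @biprod Y Z B i1 i2 p1 p2 ->
          P B -> P Y /\ P Z)].

Definition Ext1_zero (P Q : C -> Prop) : Prop :=
  forall X Y : C, P X -> Q Y -> forall h : Mor X (sh Y), h = 0.

Definition star (P Q : C -> Prop) (X : C) : Prop :=
  exists (M N : C) (f : Mor M X) (g : Mor X N) (h : Mor N (sh M)),
    [/\ P M, Q N & dist f g h].

Definition shift1 (P : C -> Prop) (N : C) : Prop :=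
  exists V : C, P V /\ iso N (sh V).

(* P[-1] : objects M with M[1] isomorphic to an object of P
   (i.e. M isomorphic to S[-1] for some S in P) *)
Definition shiftm1 (P : C -> Prop) (M : C) : Prop :=
  exists S : C, P S /\ iso (sh M) S.

Definition cotorsion (U V : C -> Prop) : Prop :=
  Ext1_zero U V /\ forall X : C, star U (shift1 V) X.

Definition twin_cotorsion (S T U V : C -> Prop) : Prop :=
  [/\ cotorsion S T, cotorsion U V & Ext1_zero S V].

Definition Wcl (T U : C -> Prop) (X : C) : Prop := T X /\ U X.

Definition Cminus (S T U : C -> Prop) (X : C) : Prop :=
  star (shiftm1 S) (Wcl T U) X.

Definition Cplus (T U V : C -> Prop) (X : C) : Prop :=
  star (Wcl T U) (shift1 V) X.

(* f factors through an object of W; in the ideal quotient C/[W],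
   underline f = underline g  iff  factors_through W (f - g). *)
Definition factors_through (W : C -> Prop) (X Y : C) (f : Mor X Y) : Prop :=
  exists (Z : C) (a : Mor X Z) (b : Mor Z Y), W Z /\ f = cmp b a.

End Tri.

(* Main.v *)
Require Import Defs.
From mathcomp Require Import all_boot all_algebra.
Import GRing.Theory.
Local Open Scope ring_scope.
Set Implicit Arguments. Unset Strict Implicit.

Section L.
Variable C : TriData.
Variable HC : @IsTriangulated C.

Lemma cmp0l (X Y Z : C) (f : Mor X Y) : cmp (0 : Mor Y Z) f = 0.
Proof.
have H := cmp_addl HC (0 : Mor Y Z) 0 f; rewrite addr0 in H.
by move: H => /(congr1 (fun x => x - cmp 0 f)); rewrite subrr addrK.
Qed.

Lemma cmp0r (X Y Z : C) (g : Mor Y Z) : cmp g (0 : Mor X Y) = 0.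
Proof.
have H := cmp_addr HC g (0 : Mor X Y) 0; rewrite addr0 in H.
by move: H => /(congr1 (fun x => x - cmp g 0)); rewrite subrr addrK.
Qed.

Lemma cmpNl (X Y Z : C) (g : Mor Y Z) (f : Mor X Y) : cmp (- g) f = - cmp g f.
Proof.
apply/eqP; rewrite -addr_eq0 addrC -(cmp_addl HC) subrr; exact/eqP/cmp0l.
Qed.

Lemma cmpNr (X Y Z : C) (g : Mor Y Z) (f : Mor X Y) : cmp g (- f) = - cmp g f.
Proof.
apply/eqP; rewrite -addr_eq0 addrC -(cmp_addr HC) subrr; exact/eqP/cmp0r.
Qed.

Lemma cmpBl (X Y Z : C) (g1 g2 : Mor Y Z) (f : Mor X Y) :
  cmp (g1 - g2) f = cmp g1 f - cmp g2 f.
Proof. by rewrite (cmp_addl HC) cmpNl. Qed.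

Lemma cmpBr (X Y Z : C) (g : Mor Y Z) (f1 f2 : Mor X Y) :
  cmp g (f1 - f2) = cmp g f1 - cmp g f2.
Proof. by rewrite (cmp_addr HC) cmpNr. Qed.

Lemma shm0 (X Y : C) : shm (0 : Mor X Y) = 0.
Proof.
have H := shm_add HC (0 : Mor X Y) 0; rewrite addr0 in H.
by move: H => /(congr1 (fun x => x - shm 0)); rewrite subrr addrK.
Qed.

Lemma shmN (X Y : C) (f : Mor X Y) : shm (- f) = - shm f.
Proof.
apply/eqP; rewrite -addr_eq0 addrC -(shm_add HC) subrr; exact/eqP/shm0.
Qed.

Lemma shm_eq0 (X Y : C) (f : Mor X Y) : shm f = 0 -> f = 0.
Proof. by move=> H; apply: (shm_inj HC); rewrite H shm0. Qed.

Lemma rot_back (X Y Z : C) (f : Mor X Y) (g : Mor Y Z) (h : Mor Z (sh X)) :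
  dist g h (- shm f) -> dist f g h.
Proof. exact: (proj2 (dist_rot HC f g h)). Qed.

Lemma rot (X Y Z : C) (f : Mor X Y) (g : Mor Y Z) (h : Mor Z (sh X)) :
  dist f g h -> dist g h (- shm f).
Proof. exact: (proj1 (dist_rot HC f g h)). Qed.

Lemma zero_mor (Z X : C) : is_zero Z -> forall (f : Mor X Z), f = 0.
Proof. by move=> [_ H] f; apply: H. Qed.

Lemma zero_mor' (Z X : C) : is_zero Z -> forall (f : Mor Z X), f = 0.
Proof. by move=> [H _] f; apply: H. Qed.

Lemma comp_zero (X Y Z : C) (f : Mor X Y) (g : Mor Y Z) (h : Mor Z (sh X)) :
  dist f g h -> cmp g f = 0.
Proof.
move=> Hd; have [Z0 HZ0] := zero_exists HC.
have Hi := dist_id HC X HZ0.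
have [c [Hc _]] := @dist_mor _ HC _ _ _ _ _ _ _ _ _ _ _ _ (idm X) f Hi Hd erefl.
by rewrite -Hc cmp0r.
Qed.

Lemma exact_cov (X Y Z : C) (f : Mor X Y) (g : Mor Y Z) (h : Mor Z (sh X)) :
  dist f g h -> forall W (p : Mor W Y), cmp g p = 0 -> exists c, cmp f c = p.
Proof.
move=> Hd W p Hp; have [Z0 HZ0] := zero_exists HC.
have Hi := rot (dist_id HC W HZ0).
have Hr := rot Hd.
have E : cmp (0 : Mor Z0 Z) (0 : Mor W Z0) = cmp g p by rewrite Hp cmp0l.
have [c [_ Hc]] := @dist_mor _ HC _ _ _ _ _ _ _ _ _ _ _ _ p (0 : Mor Z0 Z) Hi Hr E.
have [c' Hc'] := shm_surj HC c.
exists c'; apply: (shm_inj HC).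
move: Hc; rewrite -Hc' cmpNl cmpNr (shm_id HC) (cmp_idr HC) => /eqP; rewrite eqr_opp.
by rewrite (shm_comp HC) => /eqP.
Qed.

Lemma exact_contra (X Y Z : C) (f : Mor X Y) (g : Mor Y Z) (h : Mor Z (sh X)) :
  dist f g h -> forall W (p : Mor Y W), cmp p f = 0 -> exists c, cmp c g = p.
Proof.
move=> Hd W p Hp; have [Z0 HZ0] := zero_exists HC.
have Hi := rot (rot (dist_id HC W HZ0)).
have Hr := rot (rot (rot Hd)).
have E : cmp (shm p) (- shm f) = cmp (0 : Mor Z0 (sh W)) (0 : Mor (sh X) Z0)
  by rewrite cmpNr -(shm_comp HC) Hp shm0 oppr0 cmp0r.
have [c [Hc _]] := @dist_mor _ HC _ _ _ _ _ _ _ _ _ _ _ _ (0 : Mor (sh X) Z0) (shm p) Hr Hi E.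
have [c' Hc'] := shm_surj HC c.
exists c'; apply: (shm_inj HC).
move: Hc; rewrite -Hc' cmpNl cmpNr (shm_id HC) (cmp_idl HC) => /eqP; rewrite eqr_opp.
by rewrite (shm_comp HC) => /eqP.
Qed.


Lemma split_tri (P Q R : C) (a : Mor P Q) (b : Mor Q R) :
  dist a b (0 : Mor R (sh P)) ->
  exists (r : Mor R Q) (p : Mor Q P), biprod a r p b.
Proof.
move=> H.
have Hba := comp_zero H.
have [r Hr] := exact_cov (rot H) (@cmp0l _ _ _ (idm R)).
have [c Hc] := exact_contra (rot (rot H)) (@cmp0r _ _ _ (idm (sh P))).
have [c0 Hc0] := shm_surj HC c.
have Hp : cmp (- c0) a = idm P.
  apply: (shm_inj HC); rewrite (shm_id HC) -Hc -Hc0 cmpNl shmN (shm_comp HC).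
  by rewrite cmpNr.
set p := - c0 in Hp.
have [p' [Hp'a Hp'r]] : exists p' : Mor Q P, cmp p' a = idm P /\ cmp p' r = 0.
  exists (cmp p (idm Q - cmp r b)); split.
    by rewrite -(cmp_assoc HC) cmpBl (cmp_idl HC) -(cmp_assoc HC) Hba cmp0r subr0.
  by rewrite -(cmp_assoc HC) cmpBl (cmp_idl HC) -(cmp_assoc HC) Hr (cmp_idr HC) subrr cmp0r.
exists r, p'; split => //.
set e := idm Q - cmp a p' - cmp r b.
have Hea : cmp e a = 0.
  rewrite /e !cmpBl (cmp_idl HC) -!(cmp_assoc HC) Hp'a Hba (cmp_idr HC) cmp0r.
  by rewrite subrr subr0.
have [t Ht] := exact_contra H Hea.
have Her : cmp e r = 0.
  rewrite /e !cmpBl (cmp_idl HC) -!(cmp_assoc HC) Hp'r Hr (cmp_idr HC) cmp0r.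
  by rewrite subr0 subrr.
have Ht0 : t = 0 by rewrite -Her -Ht -(cmp_assoc HC) Hr (cmp_idr HC).
have : e = 0 by rewrite -Ht Ht0 cmp0l.
by rewrite /e => /eqP; rewrite subr_eq0 subr_eq addrC => /eqP ->.
Qed.

Lemma summand (M X : C) (u : Mor M X) (r : Mor X M) :
  cmp u r = idm X ->
  exists (K : C) (i1 : Mor X M) (i2 : Mor K M) (p1 : Mor M X) (p2 : Mor M K),
    biprod i1 i2 p1 p2.
Proof.
move=> Hur.
have [K [c [d Hd]]] := dist_ext HC r.
have Hz := comp_zero (rot (rot Hd)).
have Hd0 : d = 0.
  have E : d = cmp (shm u) (cmp (shm r) d).
    by rewrite (cmp_assoc HC) -(shm_comp HC) Hur (shm_id HC) (cmp_idl HC).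
  rewrite E; move: Hz; rewrite cmpNl => /eqP; rewrite oppr_eq0 => /eqP ->.
  by rewrite cmp0r.
rewrite Hd0 in Hd.
have [r' [p' Hb]] := split_tri Hd.
by exists K, r, r', p', c.
Qed.

Lemma iso_cancel (N M : C) : iso N M -> exists (k : Mor N M) (k' : Mor M N),
  cmp k' k = idm N /\ cmp k k' = idm M.
Proof. by move=> [k [k' [H1 H2]]]; exists k, k'. Qed.

Lemma perp_crit (P Q : C -> Prop) (X : C) : subcat P -> cotorsion P Q ->
  (forall Y, Q Y -> forall g : Mor X (sh Y), g = 0) -> P X.
Proof.
move=> [_ _ _ Hsum] [_ Hst] Hg.
have [M [N [u [g [h [HM [V0 [HV0 Hiso]] Hd]]]]]] := Hst X.
have [k [k' [Hk1 Hk2]]] := iso_cancel Hiso.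
have Hg0 : g = 0.
  by rewrite -(cmp_idl HC g) -Hk1 -(cmp_assoc HC) (Hg _ HV0 (cmp k g)) cmp0r.
have E : cmp g (idm X) = 0 by rewrite Hg0 cmp0l.
have [r Hr] := exact_cov Hd E.
have [K [i1 [i2 [p1 [p2 Hb]]]]] := summand Hr.
by case: (Hsum _ _ _ _ _ _ _ Hb HM).
Qed.

Lemma perp_crit_r (P Q : C -> Prop) (Y : C) : subcat Q -> cotorsion P Q ->
  (forall X, P X -> forall g : Mor X (sh Y), g = 0) -> Q Y.
Proof.
move=> [_ _ _ Hsum] [_ Hst] Hg.
have [M [N [a [b [c [HM [T0 [HT0 Hiso]] Hd]]]]]] := Hst (sh Y).
have [k [k' [Hk1 Hk2]]] := iso_cancel Hiso.
have Ha := Hg _ HM a.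
have E : cmp (idm (sh Y)) a = 0 by rewrite Ha cmp0r.
have [c' Hc'] := exact_contra Hd E.
have [gam Hgam] := shm_surj HC (cmp k b).
have [pi Hpi] := shm_surj HC (cmp c' k').
have Hpg : cmp pi gam = idm Y.
  apply: (shm_inj HC); rewrite (shm_comp HC) Hgam Hpi (shm_id HC).
  by rewrite -(cmp_assoc HC) [cmp k' _](cmp_assoc HC) Hk1 (cmp_idl HC).
have [K [i1 [i2 [p1 [p2 Hb]]]]] := summand Hpg.
by case: (Hsum _ _ _ _ _ _ _ Hb HT0).
Qed.

Lemma ext_shm (P Q : C -> Prop) (Z Y : C) : Ext1_zero P Q -> P (sh Z) -> Q Y ->
  forall p : Mor Z Y, p = 0.
Proof. by move=> He HZ HY p; apply: shm_eq0; apply: He. Qed.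

Lemma ext_iso_tgt (P Q : C -> Prop) (X N V0 : C) : Ext1_zero P Q -> P X -> Q V0 ->
  iso N (sh V0) -> forall g : Mor X N, g = 0.
Proof.
move=> He HX HV Hi g; have [k [k' [Hk1 Hk2]]] := iso_cancel Hi.
by rewrite -(cmp_idl HC g) -Hk1 -(cmp_assoc HC) (He _ _ HX HV (cmp k g)) cmp0r.
Qed.

Lemma ext_iso_src (P Q : C -> Prop) (M X0 Y : C) : Ext1_zero P Q -> iso M X0 -> P X0 ->
  Q Y -> forall g : Mor M (sh Y), g = 0.
Proof.
move=> He Hi HX HY g; have [k [k' [Hk1 Hk2]]] := iso_cancel Hi.
by rewrite -(cmp_idr HC g) -Hk1 (cmp_assoc HC) (He _ _ HX HY (cmp g k')) cmp0l.
Qed.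

Lemma ft_add (T U : C -> Prop) (X Y : C) (f g : Mor X Y) : subcat T -> subcat U ->
  factors_through (Wcl T U) f -> factors_through (Wcl T U) g ->
  factors_through (Wcl T U) (f + g).
Proof.
move=> [_ _ HT _] [_ _ HU _] [Z1 [a1 [b1 [[HT1 HU1] ->]]]] [Z2 [a2 [b2 [[HT2 HU2] ->]]]].
have [P [i1 [i2 [p1 [p2 Hb]]]]] := biprod_exists HC Z1 Z2.
have [H1 H2 H3 H4 H5] := Hb.
exists P, (cmp i1 a1 + cmp i2 a2), (cmp b1 p1 + cmp b2 p2); split.
  by split; [apply: (HT _ _ _ _ _ _ _ Hb) | apply: (HU _ _ _ _ _ _ _ Hb)].
rewrite (cmp_addl HC) !(cmp_addr HC) -!(cmp_assoc HC) ![cmp p1 (cmp _ _)](cmp_assoc HC).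
rewrite ![cmp p2 (cmp _ _)](cmp_assoc HC) H1 H2 H3 H4 !cmp0l !(cmp_idl HC).
by rewrite !cmp0r addr0 add0r.
Qed.


Lemma Sdecomp (S T U V : C -> Prop) (HU : subcat U)
  (Htw : twin_cotorsion S T U V) (Z : C) (HZ : S Z) :
  exists (T0 S0 : C) (j : Mor Z T0) (t : Mor T0 S0) (e : Mor S0 (sh Z)),
    [/\ dist j t e, T T0, U T0 & S S0].
Proof.
have [[HextST HstST] HUV HextSV] := Htw.
have [M [N [a [b [c [HM [T0 [HT0 Hiso]] Hd]]]]]] := HstST (sh Z).
have [k [k' [Hk1 Hk2]]] := iso_cancel Hiso.
have Hd1 : dist a (cmp k b) (cmp c k').
  apply: (dist_iso HC Hd).
  exists (idm M), (idm (sh Z)), k; split.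
    split; first by exists (idm M); rewrite (cmp_idl HC).
      by exists (idm (sh Z)); rewrite (cmp_idl HC).
    by exists k'.
  split.
  - by rewrite (cmp_idl HC) (cmp_idr HC).
  - by rewrite (cmp_idr HC).
  - by rewrite (shm_id HC) (cmp_idl HC) -(cmp_assoc HC) Hk1 (cmp_idr HC).
have [c0 Hc0] := shm_surj HC (cmp c k').
have Hd2 : dist (-c0) a (cmp k b) by apply: rot_back; rewrite shmN opprK Hc0.
have [b0 Hb0] := shm_surj HC (cmp k b).
have Hd3 : dist (-b0) (-c0) a by apply: rot_back; rewrite shmN opprK Hb0.
exists T0, M, (-b0), (-c0), a; split => //.
apply: (perp_crit HU HUV) => Y HY g.
have E : cmp g (-b0) = 0 := HextSV _ _ HZ HY (cmp g (-b0)).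
have [g' Hg'] := exact_contra Hd3 E.
by rewrite -Hg' (HextSV _ _ HM HY g') cmp0l.
Qed.

End L.

Unset Implicit Arguments.
Theorem proposition4p2 (C : TriData) (HC : @IsTriangulated C)
  (S T U V : C -> Prop)
  (HS : subcat S) (HT : subcat T) (HU : subcat U) (HV : subcat V)
  (Htw : twin_cotorsion S T U V)
  (A B : C) (HA : Cminus S T U A) (f : Mor A B)
  (* S_A[-1] -sA-> A -wA-> W_A -> S_A, with S_A := sh SAm1 *)
  (SAm1 WA : C) (sA : Mor SAm1 A) (wA : Mor A WA) (hA : Mor WA (sh SAm1))
  (HSA : S (sh SAm1)) (HWA : Wcl T U WA) (HdA : dist sA wA hA)
  (* S_A[-1] -(f o sA)-> B -mf-> M_f -> S_A *)
  (Mf : C) (mf : Mor B Mf) (hf : Mor Mf (sh SAm1))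
  (Hdf : dist (cmp f sA) mf hf) :
  [/\ factors_through (Wcl T U) (cmp mf f),
      (forall Y : C, Cplus T U V Y ->
        [/\ (forall a : Mor Mf Y,
               factors_through (Wcl T U) (cmp (cmp a mf) f)),
            (forall a b : Mor Mf Y,
               factors_through (Wcl T U) (cmp a mf - cmp b mf) ->
               factors_through (Wcl T U) (a - b))
          & (forall beta : Mor B Y,
               factors_through (Wcl T U) (cmp beta f) ->
               exists a : Mor Mf Y, factors_through (Wcl T U) (cmp a mf - beta))])
    & (Cminus S T U B -> Cminus S T U Mf)].
Proof.
have [[HextST HstST] HUV HextSV] := Htw.
have HST : cotorsion S T by [].
have E0 : cmp f sA = cmp (cmp f sA) (idm SAm1) by rewrite (cmp_idr HC).
have [c [Hc1 _]] := @dist_mor _ HC _ _ _ _ _ _ _ _ _ _ _ _ (idm SAm1) f HdA Hdf E0.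
have Hft1 : factors_through (Wcl T U) (cmp mf f).
  by exists WA, wA, c; split => //; rewrite Hc1.
split => //.
- move=> Y [W1 [N [e [g [h [HW1 [V0 [HV0 Hiso]] Hdy]]]]]].
  split.
  + move=> a; exists WA, wA, (cmp a c); split => //.
    by rewrite -!(cmp_assoc HC) Hc1.
  + move=> a b [Z0 [p [q [[HTZ HUZ] Hpq]]]].
    have Hp0 : cmp p (cmp f sA) = 0 := ext_shm HC HextST HSA HTZ _.
    have [p' Hp'] := exact_contra HC Hdf Hp0.
    have E : cmp (a - b - cmp q p') mf = 0.
      by rewrite !(cmpBl HC) -(cmp_assoc HC) Hp' Hpq subrr.
    have [r Hr] := exact_contra HC (rot HC Hdf) E.
    have Egr : cmp g r = 0 := ext_iso_tgt HC HextSV HSA HV0 Hiso (cmp g r).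
    have [t Ht] := exact_cov HC Hdy Egr.
    have -> : a - b = cmp q p' + cmp e (cmp t hf).
      by rewrite (cmp_assoc HC) Ht Hr [cmp q p' + _]addrC subrK.
    apply: (ft_add HC HT HU).
      by exists Z0, p', q.
    by exists W1, (cmp t hf), e.
  + move=> beta [Z0 [p [q [[HTZ HUZ] Hpq]]]].
    have Hp0 : cmp p sA = 0 := ext_shm HC HextST HSA HTZ _.
    have E : cmp beta (cmp f sA) = 0.
      by rewrite (cmp_assoc HC) Hpq -(cmp_assoc HC) Hp0 (cmp0r HC).
    have [a Ha] := exact_contra HC Hdf E.
    exists a; rewrite Ha subrr.
    by exists WA, 0, 0; split => //; rewrite (cmp0l HC).
- move=> [S1 [W2 [s1 [w1 [h1 [[SB [HSB HisoB]] [HTW2 HUW2] HdB]]]]]].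
  have Hz : cmp w1 (cmp f sA) = 0 := ext_shm HC HextST HSA HTW2 _.
  have [lam Hlam] := exact_cov HC HdB Hz.
  have [L [l1 [l2 HdL]]] := dist_ext HC lam.
  rewrite -Hlam in Hdf.
  have [u [v [HO1 _ _ _ _]]] := dist_oct HC HdL HdB Hdf.
  have [T0 [S0 [j [t [e [Hdj HT0 HU0 HS0]]]]]] := Sdecomp HC HU Htw HSA.
  have HdL2 := rot HC (rot HC HdL).
  have [X [x [y HdX]]] := dist_ext HC (cmp j l2).
  have [u2 [v2 [HO2 _ _ _ _]]] := dist_oct HC HdL2 Hdj HdX.
  have HSX : S X.
    apply: (perp_crit HC HS HST) => T1 HT1 g.
    have E : cmp g u2 = 0 := ext_iso_src HC HextST HisoB HSB HT1 _.
    have [g' Hg'] := exact_contra HC HO2 E.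
    by rewrite -Hg' (HextST _ _ HS0 HT1 g') (cmp0l HC).
  have [K HisoK] := sh_esurj HC X.
  have [ph [ph' [Hph1 Hph2]]] := iso_cancel HisoK.
  have HdX' : dist (cmp j l2) (cmp ph' x) (cmp y ph).
    apply: (dist_iso HC HdX).
    exists (idm L), (idm T0), ph'; split.
      split; first by exists (idm L); rewrite (cmp_idl HC).
        by exists (idm T0); rewrite (cmp_idl HC).
      by exists ph.
    split.
    - by rewrite (cmp_idl HC) (cmp_idr HC).
    - by rewrite (cmp_idr HC).
    - by rewrite (shm_id HC) (cmp_idl HC) -(cmp_assoc HC) Hph2 (cmp_idr HC).
  have [k0 Hk0] := shm_surj HC (cmp y ph).
  have HdK : dist (-k0) (cmp j l2) (cmp ph' x).
    by apply: (rot_back HC); rewrite (shmN HC) opprK Hk0.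
  have [W'' [h1' [h2' HdW]]] := dist_ext HC (cmp u (-k0)).
  have [u3 [v3 [HO3 _ _ _ _]]] := dist_oct HC HdK HO1 HdW.
  have HTW : T W''.
    apply: (perp_crit_r HC HT HST) => X0 HX0 g.
    have R2 := rot HC (rot HC (rot HC HO3)).
    have E : cmp (- shm v3) g = 0 := HextST _ _ HX0 HTW2 _.
    have [g'' Hg''] := exact_cov HC R2 E.
    by rewrite -Hg'' (HextST _ _ HX0 HT0 g'') (cmp0r HC).
  have HUW : U W''.
    apply: (perp_crit HC HU HUV) => Y0 HY0 g.
    have E : cmp g u3 = 0 := (proj1 HUV) _ _ HU0 HY0 _.
    have [g' Hg'] := exact_contra HC HO3 E.
    by rewrite -Hg' ((proj1 HUV) _ _ HUW2 HY0 g') (cmp0l HC).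
  exists K, W'', (cmp u (-k0)), h1', h2'; split => //.
  by exists X.
Qed.
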